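(* Let $s\geq1$, let $(g_{\mu\nu})_{0\le\mu,\nu\le s}$ be a real symmetric invertible matrix with inverse $(g^{\mu\nu})$, and let $\mathcal{A}^!$ be the unital associative $\mathbb{C}$-algebra generated by $\theta^0,\dots,\theta^s$ with relations \[ \theta^\lambda\theta^\mu\theta^\nu=\frac{1}{s}\left(g^{\lambda\mu}\theta^\nu+g^{\mu\nu}\theta^\lambda-2g^{\lambda\nu}\theta^\mu\right)\mathbf{g},\qquad \lambda,\mu,\nu\in\{0,\dots,s\}, \] where $\mathbf{g}=\sum_{\alpha,\beta}g_{\alpha\beta}\theta^\alpha\theta^\beta$, graded by $\deg\theta^\lambda=1$. Then $\mathcal{A}^!_0=\mathbb{C}1$, $\mathcal{A}^!_1=\bigoplus_\lambda\mathbb{C}\theta^\lambda$, $\mathcal{A}^!_2=\bigoplus_{\mu,\nu}\mathbb{C}\theta^\mu\theta^\nu$, $\mathcal{A}^!_3=\bigoplus_\lambda\mathbb{C}\theta^\lambda\mathbf{g}$, $\mathcal{A}^!_4=\mathbb{C}\mathbf{g}^2$, and $\mathcal{A}^!_n=0$ for $n\geq5$. In particular $\dim\mathcal{A}^!_0=\dim\mathcal{A}^!_4=1$, $\dim\mathcal{A}^!_1=\dim\mathcal{A}^!_3=s+1$, $\dim\mathcal{A}^!_2=(s+1)^2$.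
   Context: $\mathcal{A}^!$ is the dual 3-homogeneous algebra $T(E^* )/(R^\perp)$ of the cubic Yang–Mills algebra $T(E)/(R)$ (generated by $\nabla_0,\dots,\nabla_s$ with relations $\sum_{\lambda,\mu}g^{\lambda\mu}[\nabla_\lambda,[\nabla_\mu,\nabla_\nu]]=0$), where $(\theta^\lambda)$ is the dual basis of $(\nabla_\lambda)$ and $R^\perp\subset E^{*\otimes3}$ is the annihilator of $R$; the displayed relations are its defining relations. *)

(* Defs.v *)
From HB Require Import structures.
From mathcomp Require Import all_boot all_order all_algebra.
From mathcomp Require Import complex.
From mathcomp Require Import reals.

Set Implicit Arguments.
Unset Strict Implicit.
Unset Printing Implicit Defensive.

Import Order.TTheory GRing.Theory Num.Theory.
Local Open Scope ring_scope.

Section CubicDual.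
Variable R : realType.
(* s >= 1 : indices 0..s are the ordinals 'I_s.+1 *)
Variable s : nat.
Local Notation k := s.+1.
Local Notation C := (R[i])%type.
(* g = (g_{mu nu}); the inverse (g^{mu nu}) is invmx g *)
Variable g : 'M[R]_k.

Definition gC (a b : 'I_k) : C := ((g a b)%:C)%C.
Definition ginvC (a b : 'I_k) : C := (((invmx g) a b)%:C)%C.

(* Homogeneous degree-n part of the tensor algebra T(E^* ) over C:
   C-valued functions on words of length n in the letters theta^0..theta^s,
   i.e. the word w is the basis tensor theta^{w_0} ... theta^{w_{n-1}}. *)
Definition Tn (n : nat) := {ffun n.-tuple 'I_k -> C^o}.

Definition letter (n : nat) (w : n.-tuple 'I_k) (j : nat) : 'I_k := nth ord0 w j.

Definition mono (n : nat) (w : n.-tuple 'I_k) : Tn n :=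
  [ffun w' : n.-tuple 'I_k => ((w' == w)%:R : C)].

(* coefficient of the monomial theta^a theta^b theta^c in the defining relation
   theta^l theta^m theta^nu
     - 1/s (g^{lm} theta^nu + g^{m nu} theta^l - 2 g^{l nu} theta^m) gg,
   where gg = sum_{al,be} g_{al be} theta^al theta^be. *)
Definition relcoef (l m nu a b c : 'I_k) : C :=
  ((a == l) && (b == m) && (c == nu))%:R
  - (s%:R)^-1 * (ginvC l m * (a == nu)%:R + ginvC m nu * (a == l)%:R
                 - 2%:R * ginvC l nu * (a == m)%:R) * gC b c.

(* The element  e_u (x) r_{l m nu} (x) e_v  of T_n, where the relation sits in
   positions i, i+1, i+2 and u = take i w0, v = drop (i+3) w0. *)
Definition relgen (n : nat) (i : nat) (w0 : n.-tuple 'I_k) (l m nu : 'I_k) : Tn n :=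
  [ffun w : n.-tuple 'I_k => if (take i w == take i w0) && (drop (i + 3) w == drop (i + 3) w0)
             then relcoef l m nu (letter w i) (letter w i.+1) (letter w i.+2)
             else 0].

(* degree-n part of the two-sided ideal (R^perp) generated by the
   (homogeneous, cubic) relations: I_n = sum_{i+3+j=n} E^{i} R^perp E^{j} *)
Definition idealn (n : nat) : {vspace Tn n} :=
  \big[addv/0%VS]_(i < n | (i + 3 <= n)%N) \big[addv/0%VS]_(w0 : n.-tuple 'I_k)
     \big[addv/0%VS]_(l : 'I_k) \big[addv/0%VS]_(m : 'I_k) \big[addv/0%VS]_(nu : 'I_k)
        <[relgen i w0 l m nu]>%VS.

(* dim A^!_n = dim (T_n / I_n) *)
Definition dimA (n : nat) : nat := (\dim (fullv : {vspace Tn n}) - \dim (idealn n))%N.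

(* The classes modulo I_n of the family f form a basis of A^!_n = T_n / I_n. *)
Definition basis_mod (n : nat) (I : finType) (f : I -> Tn n) : Prop :=
  addv (\big[addv/0%VS]_(j : I) <[f j]>%VS) (idealn n) = fullv /\
  (forall c : I -> C, \sum_(j : I) c j *: f j \in idealn n -> forall j, c j = 0).

Definition zero_mod (n : nat) : Prop := idealn n = fullv.

Definition unit0 : Tn 0 := mono [tuple].
Definition theta (l : 'I_k) : Tn 1 := mono [tuple l].
Definition theta2 (p : 'I_k * 'I_k) : Tn 2 := mono [tuple p.1; p.2].
Definition theta_gg (l : 'I_k) : Tn 3 :=
  [ffun w : 3.-tuple 'I_k => ((letter w 0 == l)%:R : C) * gC (letter w 1) (letter w 2)].
Definition gg2 : Tn 4 :=
  [ffun w : 4.-tuple 'I_k => gC (letter w 0) (letter w 1) * gC (letter w 2) (letter w 3)].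

End CubicDual.

(* Main.v *)
Require Import Defs.
From HB Require Import structures.
From mathcomp Require Import all_boot all_order all_algebra.
From mathcomp Require Import complex.
From mathcomp Require Import reals.
From mathcomp Require Import zify ring.
Set Implicit Arguments. Unset Strict Implicit. Unset Printing Implicit Defensive.
Import Order.TTheory GRing.Theory Num.Theory.
Local Open Scope ring_scope.

Section Main.
Variable R : realType.
Variable s : nat.
Variable g : 'M[R]_s.+1.
Local Notation k := s.+1.
Local Notation C := (R[i])%type.
Local Notation T n := (Tn R s n).
Local Notation I n := (idealn g n).

Lemma ffZ n (c : C) (x : T n) w : (c *: x) w = c * x w.
Proof. by rewrite ffunE. Qed.

Lemma mono_span n (V : {vspace T n}) : (forall w, mono R w \in V) -> V = fullv.
Proof.
move=> hV; apply/eqP; rewrite eqEsubv subvf /=; apply/subvP => x _.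
have -> : x = \sum_w x w *: mono R w.
  apply/ffunP => w; rewrite sum_ffunE (bigD1 w) //= big1 ?addr0.
    by rewrite ffZ ffunE eqxx mulr1.
  by move=> w' hw'; rewrite ffZ ffunE eq_sym (negbTE hw') mulr0.
by apply: memv_suml => w _; apply: memvZ.
Qed.

Lemma sum_tupleS n (F : n.+1.-tuple 'I_k -> C) :
  \sum_w F w = \sum_a \sum_(t : n.-tuple 'I_k) F (cons_tuple a t).
Proof.
rewrite pair_big /=.
rewrite (reindex (fun p : 'I_k * n.-tuple 'I_k => cons_tuple p.1 p.2)) //=.
exists (fun w : n.+1.-tuple 'I_k => (thead w, behead_tuple w)) => [[a t] _|w _] /=.
  by congr (_, _); apply: val_inj.
by apply: val_inj => /=; case: w => [[|x w] //=].
Qed.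

Lemma letter0 n a (t : n.-tuple 'I_k) : letter (cons_tuple a t) 0 = a.
Proof. by []. Qed.
Lemma letterS n a (t : n.-tuple 'I_k) j : letter (cons_tuple a t) j.+1 = letter t j.
Proof. by []. Qed.

Lemma ideal_map n (vT : vectType C) (h : T n -> vT) (V : {vspace vT}) :
  (forall x y, h (x + y) = h x + h y) -> (forall c x, h (c *: x) = c *: h x) ->
  (forall (i : 'I_n) w0 l m nu, (i + 3 <= n)%N -> h (relgen g i w0 l m nu) \in V) ->
  forall x, x \in I n -> h x \in V.
Proof.
move=> hD hZ hgen.
have h0 : h 0 = 0 by rewrite -(scale0r 0) hZ scale0r.
pose P (U : {vspace T n}) := forall x, x \in U -> h x \in V.
have P0 : P 0%VS by move=> x; rewrite memv0 => /eqP ->; rewrite h0 mem0v.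
have PD : forall U W, P U -> P W -> P (U + W)%VS.
  by move=> U W hU hW x /memv_addP [y yU [z zW ->]]; rewrite hD; apply: memvD; [apply: hU | apply: hW].
rewrite /idealn; apply: (big_ind P) => // i hi.
apply: (big_ind P) => // w0 _; apply: (big_ind P) => // l _.
apply: (big_ind P) => // m _; apply: (big_ind P) => // nu _.
by move=> x /vlineP [c ->]; rewrite hZ memvZ // hgen.
Qed.

Lemma mem_sup (vT : vectType C) (J : finType) (P : pred J) (Vs : J -> {vspace vT}) j x :
  P j -> x \in Vs j -> x \in (\sum_(i | P i) Vs i)%VS.
Proof. by move=> Pj; apply/subvP; apply: sumv_sup Pj (subvv _). Qed.

Lemma gen_in n (i : 'I_n) w0 l m nu : (i + 3 <= n)%N -> relgen g i w0 l m nu \in I n.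
Proof.
move=> hi; rewrite /idealn.
apply: (mem_sup (j := i)) => //; apply: (mem_sup (j := w0)) => //.
apply: (mem_sup (j := l)) => //; apply: (mem_sup (j := m)) => //.
apply: (mem_sup (j := nu)) => //; exact: memv_line.
Qed.

Lemma dimA_basis n (J : finType) (f : J -> T n) : basis_mod g f -> dimA g n = #|J|.
Proof.
move=> [hsp hind].
set U := (\sum_(j : J) <[f j]>)%VS.
have sumc : forall x, x \in U -> exists c : J -> C, x = \sum_j c j *: f j.
  move=> x /memv_sumP [vs hvs ->].
  have : forall j, exists c, vs j = c *: f j by move=> j; apply/vlineP; exact: hvs.
  by case/fin_all_exists => c hc; exists c; apply: eq_bigr => j _; rewrite hc.
have fnz : forall j, f j != 0.
  move=> j; apply/eqP => fj0.
  have h1 : \sum_i (fun i => ((i == j)%:R : C)) i *: f i \in I n.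
    rewrite (bigD1 j) //= big1 ?addr0; first by rewrite eqxx scale1r fj0 mem0v.
    by move=> i /negbTE ->; rewrite scale0r.
  by have := hind _ h1 j; rewrite eqxx => /eqP; rewrite oner_eq0.
have dU : \dim U = #|J|.
  have /directvP -> : directv U.
    apply/directv_sum_independent => us hus hsum i _.
    have : forall j, exists c, us j = c *: f j by move=> j; apply/vlineP; exact: hus.
    case/fin_all_exists => c hc.
    have hc0 := hind c; rewrite -(eq_bigr _ (fun j _ => hc j)) hsum mem0v in hc0.
    by rewrite hc hc0 // scale0r.
  rewrite /= -sum1_card; apply: eq_bigr => j _; by rewrite dim_vline fnz.
have cap : (U :&: I n = 0)%VS.
  apply/eqP; rewrite -subv0; apply/subvP => x /memv_capP [/sumc [c ->] xI].
  by rewrite big1 ?mem0v // => j _; rewrite (hind c xI j) scale0r.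
rewrite /dimA -hsp; have := dimv_sum_cap U (I n).
by rewrite cap dimv0 addn0 => ->; rewrite dU addnK.
Qed.


Lemma ideal_small n : (n <= 2)%N -> I n = 0%VS.
Proof. by move=> hn; rewrite /idealn big1 // => i hi; exfalso; lia. Qed.

Lemma basis_monos n (J : finType) (phi : J -> n.-tuple 'I_k) :
  (n <= 2)%N -> bijective phi -> basis_mod g (fun j => mono R (phi j)).
Proof.
move=> hn [psi h1 h2]; split.
  rewrite ideal_small // addv0; apply: mono_span => w.
  apply: (mem_sup (j := psi w)) => //; rewrite h2; exact: memv_line.
move=> c; rewrite ideal_small // memv0 => /eqP h j.
have := congr1 (fun x : T n => x (phi j)) h; rewrite sum_ffunE ffunE (bigD1 j) //= big1.
  by rewrite ffZ ffunE eqxx mulr1 addr0.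
move=> i hij; rewrite ffZ ffunE; case: eqP => [/(can_inj h1) e|]; last by rewrite mulr0.
by rewrite e eqxx in hij.
Qed.

Lemma tuple0_eq (w : 0.-tuple 'I_k) : w = [tuple].
Proof. by apply: val_inj; case: w => [[]]. Qed.
Lemma tuple1_eq (w : 1.-tuple 'I_k) : w = [tuple letter w 0].
Proof. by apply: val_inj; case: w => [[|a [|]]]. Qed.
Lemma tuple2_eq (w : 2.-tuple 'I_k) : w = [tuple letter w 0; letter w 1].
Proof. by apply: val_inj; case: w => [[|a [|b [|]]]]. Qed.
Lemma tuple3_eq (w : 3.-tuple 'I_k) : w = [tuple letter w 0; letter w 1; letter w 2].
Proof. by apply: val_inj; case: w => [[|a [|b [|c [|]]]]]. Qed.
Lemma tuple4_eq (w : 4.-tuple 'I_k) : w = [tuple letter w 0; letter w 1; letter w 2; letter w 3].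
Proof. by apply: val_inj; case: w => [[|a [|b [|c [|d [|]]]]]]. Qed.
Lemma tuple5_eq (w : 5.-tuple 'I_k) :
  w = [tuple letter w 0; letter w 1; letter w 2; letter w 3; letter w 4].
Proof. by apply: val_inj; case: w => [[|a [|b [|c [|d [|e [|]]]]]]]. Qed.

Lemma basis0 : basis_mod g (fun _ : unit => unit0 R s).
Proof.
apply: (basis_monos (phi := fun _ : unit => [tuple])) => //.
by exists (fun _ => tt) => [[]|w] //; rewrite [RHS]tuple0_eq.
Qed.

Lemma basis1 : basis_mod g (theta R (s:=s)).
Proof.
apply: (basis_monos (phi := fun l : 'I_k => [tuple l])) => //.
by exists (fun w : 1.-tuple 'I_k => letter w 0) => [l|w] //; rewrite [RHS]tuple1_eq.
Qed.

Lemma basis2 : basis_mod g (theta2 R (s:=s)).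
Proof.
apply: (basis_monos (phi := fun p : 'I_k * 'I_k => [tuple p.1; p.2])) => //.
exists (fun w : 2.-tuple 'I_k => (letter w 0, letter w 1)) => [[a b]|w] //.
by rewrite [RHS]tuple2_eq.
Qed.

Lemma sum0t (F : 0.-tuple 'I_k -> C) : \sum_t F t = F [tuple].
Proof. by rewrite (big_pred1 [tuple]) // => t; apply/esym/eqP; exact: tuple0_eq. Qed.

Lemma sum3 (F : 3.-tuple 'I_k -> C) :
  \sum_w F w = \sum_a \sum_b \sum_c F [tuple a; b; c].
Proof.
rewrite sum_tupleS; apply: eq_bigr => a _; rewrite sum_tupleS; apply: eq_bigr => b _.
rewrite sum_tupleS; apply: eq_bigr => c _; rewrite sum0t; congr F; exact: val_inj.
Qed.

Lemma sum4 (F : 4.-tuple 'I_k -> C) :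
  \sum_w F w = \sum_a \sum_b \sum_c \sum_d F [tuple a; b; c; d].
Proof.
rewrite sum_tupleS; apply: eq_bigr => a _; rewrite sum_tupleS; apply: eq_bigr => b _.
rewrite sum_tupleS; apply: eq_bigr => c _; rewrite sum_tupleS; apply: eq_bigr => d _.
rewrite sum0t; congr F; exact: val_inj.
Qed.


Hypothesis hs : (1 <= s)%N.
Hypothesis gsym : g^T = g.
Hypothesis gu : g \in unitmx.

Local Notation gc := (gC g).
Local Notation Gc := (ginvC g).
Local Notation dl a b := (((a == b)%:R : C)).

Lemma eqC (x y : C) : x = y -> x = y. Proof. by []. Qed.

Lemma gcS a b : gc a b = gc b a.
Proof. by rewrite /gC -{1}gsym mxE. Qed.

Lemma GcS a b : Gc a b = Gc b a.
Proof. by rewrite /ginvC -{1}gsym -trmx_inv mxE. Qed.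

Lemma gG a c : \sum_b gc a b * Gc b c = dl a c.
Proof.
have := congr1 (fun M : 'M[R]_k => M a c) (mulmxV gu); rewrite !mxE => h.
rewrite /gC /ginvC; under eq_bigr do rewrite -rmorphM.
by rewrite -rmorph_sum h rmorph_nat.
Qed.

Lemma Gg a c : \sum_b Gc a b * gc b c = dl a c.
Proof.
have := congr1 (fun M : 'M[R]_k => M a c) (mulVmx gu); rewrite !mxE => h.
rewrite /gC /ginvC; under eq_bigr do rewrite -rmorphM.
by rewrite -rmorph_sum h rmorph_nat.
Qed.

Lemma sdl (F : 'I_k -> C) x : \sum_a dl a x * F a = F x.
Proof.
rewrite (bigD1 x) //= eqxx mul1r big1 ?addr0 // => a /negbTE ->; by rewrite mul0r.
Qed.

Lemma trgG : \sum_a \sum_b gc a b * Gc a b = k%:R.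
Proof.
under eq_bigr => a _ do under eq_bigr => b _ do rewrite (GcS a b).
under eq_bigr => a _ do rewrite gG eqxx.
by rewrite sumr_const card_ord.
Qed.

Definition Psi (Phi : 'I_k -> 'I_k -> 'I_k -> C) a := \sum_b \sum_c gc b c * Phi a b c.

Lemma rel_pair l m nu (Phi : 'I_k -> 'I_k -> 'I_k -> C) :
  \sum_a \sum_b \sum_c relcoef g l m nu a b c * Phi a b c =
  Phi l m nu - (s%:R)^-1 * (Gc l m * Psi Phi nu + Gc m nu * Psi Phi l
                            - 2%:R * Gc l nu * Psi Phi m).
Proof.
transitivity (\sum_a dl a l * (\sum_b dl b m * (\sum_c dl c nu * Phi a b c))
  - \sum_a (s%:R)^-1 * (Gc l m * dl a nu + Gc m nu * dl a l - 2%:R * Gc l nu * dl a m)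
      * Psi Phi a).
  rewrite -sumrB; apply: eq_bigr => a _; rewrite /Psi !mulr_sumr -sumrB.
  apply: eq_bigr => b _; rewrite !mulr_sumr -sumrB; apply: eq_bigr => c _.
  rewrite /relcoef -!mulnb !natrM.
  ring.
have e1 : \sum_a dl a l * (\sum_b dl b m * (\sum_c dl c nu * Phi a b c)) = Phi l m nu.
  under eq_bigr => a _ do under eq_bigr => b _ do rewrite sdl.
  under eq_bigr => a _ do rewrite sdl.
  by rewrite sdl.
rewrite e1; congr (_ - _).
transitivity ((s%:R)^-1 * (Gc l m * (\sum_a dl a nu * Psi Phi a) + Gc m nu * (\sum_a dl a l * Psi Phi a)
   - 2%:R * Gc l nu * (\sum_a dl a m * Psi Phi a))); last by rewrite !sdl.
rewrite !mulr_sumr -big_split -sumrB mulr_sumr; apply: eq_bigr => a _ /=; ring.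
Qed.

Lemma sdr (F : 'I_k -> C) x : \sum_a F a * dl a x = F x.
Proof. by under eq_bigr do rewrite mulrC; rewrite sdl. Qed.

Lemma sdl' (F : 'I_k -> C) x : \sum_a dl x a * F a = F x.
Proof. by under eq_bigr do rewrite eq_sym; rewrite sdl. Qed.

Lemma sdr' (F : 'I_k -> C) x : \sum_a F a * dl x a = F x.
Proof. by under eq_bigr do rewrite eq_sym; rewrite sdr. Qed.

Lemma natk : (k%:R : C) = s%:R + 1.
Proof. by rewrite -natr1. Qed.

Lemma sn0 : (s%:R : C) != 0.
Proof. by rewrite pnatr_eq0 -lt0n. Qed.

Lemma scC (a b : C) : a *: (b : C^o) = a * b. Proof. by []. Qed.

Lemma eqt3 (a b c a' b' c' : 'I_k) :
  ([tuple a; b; c] == [tuple a'; b'; c'] :> 3.-tuple 'I_k) = [&& a == a', b == b' & c == c'].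
Proof. by rewrite -val_eqE /= !eqseq_cons andbT. Qed.

Lemma ex3 (w : 3.-tuple 'I_k) : exists a b c, w = [tuple a; b; c].
Proof. by exists (letter w 0), (letter w 1), (letter w 2); exact: tuple3_eq. Qed.

Lemma relgen3 (w0 : 3.-tuple 'I_k) l m nu : relgen g 0 w0 l m nu =
  mono R [tuple l; m; nu] - (s%:R)^-1 *: (Gc l m *: theta_gg g nu + Gc m nu *: theta_gg g l
     - 2%:R *: (Gc l nu *: theta_gg g m)).
Proof.
apply/ffunP => w; have [a [b [c ->]]] := ex3 w; have [a0 [b0 [c0 ->]]] := ex3 w0.
rewrite !ffunE /= eqt3 /relcoef /letter /= !scC -!mulnb !natrM; ring.
Qed.

Definition fcoef (r a b c : 'I_k) : C :=
  Gc a b * dl c r - 2%:R * (Gc a c * dl b r) + Gc b c * dl a r.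

Lemma Psi_fcoef r a : Psi (fcoef r) a = s%:R * dl a r.
Proof.
rewrite /Psi /fcoef.
under eq_bigr => b _ do under eq_bigr => c _ do rewrite mulrDr mulrBr.
under eq_bigr => b _ do rewrite big_split sumrB /=.
rewrite big_split sumrB /=.
have e1 : \sum_b \sum_c gc b c * (Gc a b * dl c r) = dl a r.
  under eq_bigr => b _ do under eq_bigr => c _ do rewrite mulrA.
  under eq_bigr => b _ do rewrite sdr.
  by under eq_bigr => b _ do rewrite mulrC; rewrite Gg.
have e2 : \sum_b \sum_c gc b c * (2%:R * (Gc a c * dl b r)) = 2%:R * dl a r.
  rewrite exchange_big /=.
  under eq_bigr => c _ do under eq_bigr => b _ do rewrite !mulrA.
  under eq_bigr => c _ do rewrite sdr (gcS r c) -mulrA mulrCA.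
  by rewrite -mulr_sumr; under eq_bigr => c _ do rewrite mulrC; rewrite Gg.
have e3 : \sum_b \sum_c gc b c * (Gc b c * dl a r) = k%:R * dl a r.
  under eq_bigr => b _ do under eq_bigr => c _ do rewrite mulrA.
  under eq_bigr => b _ do rewrite -mulr_suml.
  by rewrite -mulr_suml trgG.
rewrite e1 e2 e3 natk; ring.
Qed.


Definition pr n (F : n.-tuple 'I_k -> C) (x : T n) : C := \sum_w F w * x w.

Lemma pr_sum n (F : n.-tuple 'I_k -> C) (J : finType) (cf : J -> C) (f : J -> T n) :
  pr F (\sum_j cf j *: f j) = \sum_j cf j * pr F (f j).
Proof.
rewrite /pr; under eq_bigr => w _ do rewrite sum_ffunE mulr_sumr.
rewrite exchange_big; apply: eq_bigr => j _; rewrite mulr_sumr; apply: eq_bigr => w _.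
by rewrite ffZ mulrCA.
Qed.

Lemma pr_ideal n (F : n.-tuple 'I_k -> C) :
  (forall (i : 'I_n) w0 l m nu, (i + 3 <= n)%N -> pr F (relgen g i w0 l m nu) = 0) ->
  forall x, x \in I n -> pr F x = 0.
Proof.
move=> hgen x hx.
suff : (pr F x : C^o) \in (0%VS : {vspace C^o}) by rewrite memv0 => /eqP.
apply: (ideal_map (vT := C^o) (h := pr F)) hx.
- by move=> x1 y1; rewrite /pr -big_split; apply: eq_bigr => w _; rewrite ffunE mulrDr.
- move=> c x1; rewrite /pr scC mulr_sumr; apply: eq_bigr => w _; by rewrite ffZ mulrCA.
- by move=> i w0 l m nu hi; rewrite hgen // mem0v.
Qed.

Lemma lt3 (a b c : 'I_k) : [/\ letter [tuple a; b; c] 0 = a, letter [tuple a; b; c] 1 = b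
  & letter [tuple a; b; c] 2 = c].
Proof. by []. Qed.

Lemma basis3 : basis_mod g (theta_gg g).
Proof.
have inU : forall l, theta_gg g l \in (\sum_(j : 'I_k) <[theta_gg g j]>)%VS.
  by move=> l; apply: (mem_sup (j := l)) => //; exact: memv_line.
split.
  apply: mono_span => w; have [a [b [c ->]]] := ex3 w.
  have -> : mono R [tuple a; b; c] = (s%:R)^-1 *: (Gc a b *: theta_gg g c
      + Gc b c *: theta_gg g a - 2%:R *: (Gc a c *: theta_gg g b))
      + relgen g (@ord0 2) [tuple a; b; c] a b c.
    by rewrite relgen3 addrC subrK.
  apply: memv_add; last exact: gen_in.
  by rewrite !(rpredZ, rpredB, rpredD).
move=> cf hin r.
pose F (w : 3.-tuple 'I_k) := fcoef r (letter w 0) (letter w 1) (letter w 2).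
have h0 := pr_ideal (F := F) _ hin.
rewrite pr_sum in h0.
have hth : forall j, pr F (theta_gg g j) = s%:R * dl j r.
  move=> j; rewrite -Psi_fcoef -(sdl (Psi (fcoef r)) j) /pr sum3.
  apply: eq_bigr => a _; rewrite /Psi mulr_sumr; apply: eq_bigr => b _.
  rewrite mulr_sumr; apply: eq_bigr => c _; rewrite ffunE /F /letter /=; ring.
have hgen : forall (i : 'I_3) w0 l m nu, (i + 3 <= 3)%N -> pr F (relgen g i w0 l m nu) = 0.
  move=> i w0 l m nu hi; have -> : (i : nat) = 0%N by lia.
  have [a0 [b0 [c0 ->]]] := ex3 w0.
  transitivity (\sum_a \sum_b \sum_c relcoef g l m nu a b c * fcoef r a b c).
    rewrite /pr sum3; apply: eq_bigr => a _; apply: eq_bigr => b _; apply: eq_bigr => c _.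
    by rewrite ffunE /F /letter /= mulrC.
  rewrite rel_pair !Psi_fcoef /fcoef.
  by field; exact: sn0.
have := h0 hgen.
under eq_bigr => j _ do rewrite hth mulrA.
by rewrite sdr => /eqP; rewrite mulf_eq0 (negbTE sn0) orbF => /eqP.
Qed.

Lemma sum2_comb (P Q1 Q2 Q3 : 'I_k -> 'I_k -> C) (x : C) :
  \sum_l \sum_m (P l m - x * (Q1 l m + Q2 l m - 2%:R * Q3 l m)) =
  \sum_l \sum_m P l m - x * (\sum_l \sum_m Q1 l m + \sum_l \sum_m Q2 l m
                                - 2%:R * \sum_l \sum_m Q3 l m).
Proof.
rewrite !mulr_sumr -big_split -sumrB mulr_sumr -sumrB.
apply: eq_bigr => l _ /=.
rewrite !mulr_sumr -big_split -sumrB mulr_sumr -sumrB.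
by apply: eq_bigr => m _ /=; ring.
Qed.

Lemma gG' a c : \sum_b gc b a * Gc b c = dl a c.
Proof. by under eq_bigr do rewrite gcS; rewrite gG. Qed.

Lemma C1 nu a b c : \sum_l \sum_m gc l m * relcoef g l m nu a b c =
  gc a b * dl c nu - dl a nu * gc b c.
Proof.
have e : forall l m, gc l m * relcoef g l m nu a b c =
  gc l m * (dl a l * dl b m * dl c nu) - ((s%:R)^-1 * gc b c) *
   (gc l m * Gc l m * dl a nu + gc l m * Gc m nu * dl a l - 2%:R * (gc l m * Gc l nu * dl a m)).
  by move=> l m; rewrite /relcoef -!mulnb !natrM; ring.
under eq_bigr => l _ do under eq_bigr => m _ do rewrite e.
rewrite sum2_comb.
have e1 : \sum_l \sum_m gc l m * (dl a l * dl b m * dl c nu) = gc a b * dl c nu.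
  transitivity (\sum_l dl a l * \sum_m dl b m * (gc l m * dl c nu)).
    by apply: eq_bigr => l _; rewrite mulr_sumr; apply: eq_bigr => m _; ring.
  by under eq_bigr => l _ do rewrite sdl'; rewrite sdl'.
have e2 : \sum_l \sum_m gc l m * Gc l m * dl a nu = k%:R * dl a nu.
  by under eq_bigr => l _ do rewrite -mulr_suml; rewrite -mulr_suml trgG.
have e3 : \sum_l \sum_m gc l m * Gc m nu * dl a l = dl a nu.
  transitivity (\sum_l dl a l * \sum_m gc l m * Gc m nu).
    by apply: eq_bigr => l _; rewrite mulr_sumr; apply: eq_bigr => m _; ring.
  by under eq_bigr => l _ do rewrite gG; rewrite sdl'.
have e4 : \sum_l \sum_m gc l m * Gc l nu * dl a m = dl a nu.
  rewrite exchange_big /=.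
  transitivity (\sum_m dl a m * \sum_l gc l m * Gc l nu).
    by apply: eq_bigr => m _; rewrite mulr_sumr; apply: eq_bigr => l _; ring.
  by under eq_bigr => m _ do rewrite gG'; rewrite sdl'.
rewrite e1 e2 e3 e4 natk; field; exact: sn0.
Qed.

Lemma sum1_comb (P Q1 Q2 Q3 : 'I_k -> C) (x : C) :
  \sum_l (P l - x * (Q1 l + Q2 l - 2%:R * Q3 l)) =
  \sum_l P l - x * (\sum_l Q1 l + \sum_l Q2 l - 2%:R * \sum_l Q3 l).
Proof.
rewrite !mulr_sumr -big_split -sumrB mulr_sumr -sumrB.
by apply: eq_bigr => l _ /=; ring.
Qed.

Lemma C2 m a b c : \sum_l \sum_nu gc l nu * relcoef g l m nu a b c =
  gc a c * dl b m + 2%:R * dl a m * gc b c.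
Proof.
have e : forall l nu, gc l nu * relcoef g l m nu a b c =
  gc l nu * (dl a l * dl b m * dl c nu) - ((s%:R)^-1 * gc b c) *
   (gc l nu * Gc l m * dl a nu + gc l nu * Gc m nu * dl a l - 2%:R * (gc l nu * Gc l nu * dl a m)).
  by move=> l nu; rewrite /relcoef -!mulnb !natrM; ring.
under eq_bigr => l _ do under eq_bigr => nu _ do rewrite e.
rewrite sum2_comb.
have e1 : \sum_l \sum_nu gc l nu * (dl a l * dl b m * dl c nu) = gc a c * dl b m.
  transitivity (\sum_l dl a l * \sum_nu dl c nu * (gc l nu * dl b m)).
    by apply: eq_bigr => l _; rewrite mulr_sumr; apply: eq_bigr => nu _; ring.
  by under eq_bigr => l _ do rewrite sdl'; rewrite sdl'.
have e2 : \sum_l \sum_nu gc l nu * Gc l m * dl a nu = dl a m.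
  rewrite exchange_big /=.
  transitivity (\sum_nu dl a nu * \sum_l gc l nu * Gc l m).
    by apply: eq_bigr => nu _; rewrite mulr_sumr; apply: eq_bigr => l _; ring.
  by under eq_bigr => nu _ do rewrite gG'; rewrite sdl'.
have e3 : \sum_l \sum_nu gc l nu * Gc m nu * dl a l = dl a m.
  transitivity (\sum_l dl a l * \sum_nu gc l nu * Gc nu m).
    by apply: eq_bigr => l _; rewrite mulr_sumr; apply: eq_bigr => nu _; rewrite (GcS m); ring.
  by under eq_bigr => l _ do rewrite gG; rewrite sdl'.
have e4 : \sum_l \sum_nu gc l nu * Gc l nu * dl a m = k%:R * dl a m.
  by under eq_bigr => l _ do rewrite -mulr_suml; rewrite -mulr_suml trgG.
rewrite e1 e2 e3 e4 natk; field; exact: sn0.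
Qed.

Lemma C3 m rho a b c d : \sum_nu gc a nu * relcoef g m nu rho b c d =
  gc a c * dl b m * dl d rho
  - (s%:R)^-1 * (dl a m * dl b rho + dl a rho * dl b m - 2%:R * (Gc m rho * gc a b)) * gc c d.
Proof.
have e : forall nu, gc a nu * relcoef g m nu rho b c d =
  gc a nu * dl c nu * (dl b m * dl d rho) - ((s%:R)^-1 * gc c d) *
   (gc a nu * Gc nu m * dl b rho + gc a nu * Gc nu rho * dl b m
     - 2%:R * (Gc m rho * (gc a nu * dl b nu))).
  by move=> nu; rewrite /relcoef -!mulnb !natrM (GcS m nu); ring.
under eq_bigr => nu _ do rewrite e.
rewrite sum1_comb -!mulr_suml !gG -mulr_sumr !sdr'; ring.
Qed.

Lemma ffD n (x y : T n) w : (x + y) w = x w + y w.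
Proof. by rewrite ffunE. Qed.
Lemma ffN n (x : T n) w : (- x) w = - x w.
Proof. by rewrite ffunE. Qed.
Lemma ffB n (x y : T n) w : (x - y) w = x w - y w.
Proof. by rewrite !ffunE. Qed.

Lemma eqt4 (a b c d a' b' c' d' : 'I_k) :
  ([tuple a; b; c; d] == [tuple a'; b'; c'; d'] :> 4.-tuple 'I_k) =
  [&& a == a', b == b', c == c' & d == d'].
Proof. by rewrite -val_eqE /= !eqseq_cons andbT. Qed.

Lemma ex4 (w : 4.-tuple 'I_k) : exists a b c d, w = [tuple a; b; c; d].
Proof. by exists (letter w 0), (letter w 1), (letter w 2), (letter w 3); exact: tuple4_eq. Qed.

Lemma ifdl (b : bool) (x : C) : (if b then x else 0) = b%:R * x.
Proof. by case: b; rewrite ?mul1r ?mul0r. Qed.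

Lemma rg40 (w0 : 4.-tuple 'I_k) l m nu a b c d :
  relgen g 0 w0 l m nu [tuple a; b; c; d] = dl d (letter w0 3) * relcoef g l m nu a b c.
Proof.
have [a0 [b0 [c0 [d0 ->]]]] := ex4 w0.
by rewrite ffunE /letter /= eqseq_cons andbT ifdl.
Qed.

Lemma rg41 (w0 : 4.-tuple 'I_k) l m nu a b c d :
  relgen g 1 w0 l m nu [tuple a; b; c; d] = dl a (letter w0 0) * relcoef g l m nu b c d.
Proof.
have [a0 [b0 [c0 [d0 ->]]]] := ex4 w0.
by rewrite ffunE /letter /= !eqseq_cons !andbT ifdl.
Qed.

Definition Xl a b : T 4 :=
  [ffun w => dl (letter w 0) a * dl (letter w 1) b * gc (letter w 2) (letter w 3)].
Definition Xm a b : T 4 :=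
  [ffun w => dl (letter w 0) a * gc (letter w 1) (letter w 2) * dl (letter w 3) b].

Definition i40 : 'I_4 := @Ordinal 4 0 isT.
Definition i41 : 'I_4 := @Ordinal 4 1 isT.

Lemma R0in l m nu d : mono R [tuple l; m; nu; d] - (s%:R)^-1 *: (Gc l m *: Xm nu d
   + Gc m nu *: Xm l d - 2%:R *: (Gc l nu *: Xm m d)) \in I 4.
Proof.
have -> : mono R [tuple l; m; nu; d] - (s%:R)^-1 *: (Gc l m *: Xm nu d
   + Gc m nu *: Xm l d - 2%:R *: (Gc l nu *: Xm m d)) = relgen g i40 [tuple d; d; d; d] l m nu.
  apply/ffunP => w; have [a [b [c [d1 ->]]]] := ex4 w.
  rewrite rg40 !(ffB, ffD, ffN, ffZ) !ffunE /letter /= ?scC eqt4 /relcoef -!mulnb !natrM; ring.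
exact: gen_in.
Qed.

Lemma R1in e l m nu : mono R [tuple e; l; m; nu] - (s%:R)^-1 *: (Gc l m *: Xl e nu
   + Gc m nu *: Xl e l - 2%:R *: (Gc l nu *: Xl e m)) \in I 4.
Proof.
have -> : mono R [tuple e; l; m; nu] - (s%:R)^-1 *: (Gc l m *: Xl e nu
   + Gc m nu *: Xl e l - 2%:R *: (Gc l nu *: Xl e m)) = relgen g i41 [tuple e; e; e; e] l m nu.
  apply/ffunP => w; have [a [b [c [d1 ->]]]] := ex4 w.
  rewrite rg41 !(ffB, ffD, ffN, ffZ) !ffunE /letter /= ?scC eqt4 /relcoef -!mulnb !natrM; ring.
exact: gen_in.
Qed.

Lemma E1 e nu : Xm e nu - Xl e nu \in I 4.
Proof.
have -> : Xm e nu - Xl e nu =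
    \sum_l \sum_m gc l m *: relgen g i41 [tuple e; e; e; e] l m nu.
  apply/ffunP => w; have [a [b [c [d ->]]]] := ex4 w.
  rewrite sum_ffunE.
  under eq_bigr => l _ do rewrite sum_ffunE.
  under eq_bigr => l _ do under eq_bigr => m _ do rewrite ffZ rg41 /letter /= mulrCA.
  under eq_bigr => l _ do rewrite -mulr_sumr.
  rewrite -mulr_sumr C1 !(ffB) !ffunE /letter /=; ring.
apply: rpred_sum => l _; apply: rpred_sum => m _; apply: rpredZ; exact: gen_in.
Qed.

Lemma E2 m rho : 2%:R *: Xm m rho + (s%:R)^-1 *: (Xl m rho + Xl rho m - (2%:R * Gc m rho) *: gg2 g)
   \in I 4.
Proof.
have -> : 2%:R *: Xm m rho + (s%:R)^-1 *: (Xl m rho + Xl rho m - (2%:R * Gc m rho) *: gg2 g) =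
    \sum_l \sum_nu gc l nu *: (relgen g i40 [tuple rho; rho; rho; rho] l m nu
                                - relgen g i41 [tuple l; l; l; l] m nu rho).
  apply/ffunP => w; have [a [b [c [d ->]]]] := ex4 w.
  rewrite sum_ffunE.
  under eq_bigr => l _ do rewrite sum_ffunE.
  under eq_bigr => l _ do under eq_bigr => nu _ do rewrite ffZ ffB rg40 rg41 /letter /= mulrBr.
  under eq_bigr => l _ do rewrite sumrB.
  rewrite sumrB.
  transitivity (dl d rho * (\sum_l \sum_nu gc l nu * relcoef g l m nu a b c)
     - \sum_l dl a l * (\sum_nu gc l nu * relcoef g m nu rho b c d)).
    rewrite C2 sdl' C3 !(ffB, ffD, ffN, ffZ) !ffunE /letter /=; ring.
  congr (_ - _).
    rewrite mulr_sumr; apply: eq_bigr => l _; rewrite mulr_sumr; apply: eq_bigr => nu _; ring.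
  apply: eq_bigr => l _; rewrite mulr_sumr; apply: eq_bigr => nu _; ring.
apply: rpred_sum => l _; apply: rpred_sum => nu _; apply: rpredZ; apply: rpredB; exact: gen_in.
Qed.

Lemma kn0 : (k%:R : C) != 0.
Proof. by rewrite pnatr_eq0. Qed.

Lemma Tin m rho : (2%:R * s%:R + 1) *: Xl m rho + Xl rho m - (2%:R * Gc m rho) *: gg2 g \in I 4.
Proof.
have -> : (2%:R * s%:R + 1) *: Xl m rho + Xl rho m - (2%:R * Gc m rho) *: gg2 g =
  s%:R *: ((2%:R *: Xm m rho + (s%:R)^-1 *: (Xl m rho + Xl rho m - (2%:R * Gc m rho) *: gg2 g))
    - 2%:R *: (Xm m rho - Xl m rho)).
  move: (Xl m rho) (Xl rho m) (Xm m rho) (gg2 g) => A B D E.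
  apply/ffunP => w; rewrite !(ffB, ffD, ffN, ffZ); field; exact: sn0.
by apply: rpredZ; apply: rpredB; [exact: E2 | apply: rpredZ; exact: E1].
Qed.

Lemma F1l m rho : Xl m rho - (Gc m rho / k%:R) *: gg2 g \in I 4.
Proof.
have -> : Xl m rho - (Gc m rho / k%:R) *: gg2 g =
  (4%:R * s%:R * k%:R)^-1 *: ((2%:R * s%:R + 1) *:
     ((2%:R * s%:R + 1) *: Xl m rho + Xl rho m - (2%:R * Gc m rho) *: gg2 g)
   - ((2%:R * s%:R + 1) *: Xl rho m + Xl m rho - (2%:R * Gc rho m) *: gg2 g)).
  rewrite (GcS rho m); move: (Xl m rho) (Xl rho m) (gg2 g) => A B E.
  apply/ffunP => w; rewrite !(ffB, ffD, ffN, ffZ) natk; field.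
  by rewrite -natk kn0 sn0.
by apply: rpredZ; apply: rpredB; [apply: rpredZ|]; exact: Tin.
Qed.

Lemma F1 m rho : Xm m rho - (Gc m rho / k%:R) *: gg2 g \in I 4.
Proof.
have -> : Xm m rho - (Gc m rho / k%:R) *: gg2 g =
  (Xm m rho - Xl m rho) + (Xl m rho - (Gc m rho / k%:R) *: gg2 g).
  by rewrite addrA subrK.
by apply: rpredD; [exact: E1 | exact: F1l].
Qed.

Definition cD l m nu rho : C := (s%:R * k%:R)^-1 *
  (Gc l m * Gc nu rho + Gc m nu * Gc l rho - 2%:R * (Gc l nu * Gc m rho)).

Lemma D4lin (K : fieldType) (aT : finType) (A B D E G : {ffun aT -> K^o})
  (q r x1 x2 x3 x4 x5 x6 : K) : q != 0 -> r != 0 ->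
  A - ((q * r)^-1 * (x1 * x2 + x3 * x4 - 2%:R * (x5 * x6))) *: G =
  (A - q^-1 *: (x1 *: B + x3 *: D - 2%:R *: (x5 *: E)))
  + q^-1 *: (x1 *: (B - (x2 / r) *: G) + x3 *: (D - (x4 / r) *: G)
     - 2%:R *: (x5 *: (E - (x6 / r) *: G))).
Proof.
move=> hq hr; apply/ffunP => w; rewrite !ffunE /=.
rewrite /GRing.scale /=; field.
by rewrite hq hr.
Qed.


Lemma D4 l m nu rho : mono R [tuple l; m; nu; rho] - cD l m nu rho *: gg2 g \in I 4.
Proof.
rewrite /cD (D4lin _ (Xm nu rho) (Xm l rho) (Xm m rho)) ?sn0 ?kn0 //.
apply: rpredD; first exact: R0in.
by apply: rpredZ; apply: rpredB; [apply: rpredD|]; rewrite ?rpredZ ?F1.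
Qed.






Lemma add_sub_split (V : zmodType) (x y : V) : x = y + (x - y).
Proof. by rewrite addrC subrK. Qed.

Definition FF a b c d : C := Gc a b * Gc c d - 2%:R * (Gc a c * Gc b d) + Gc a d * Gc b c.

Lemma sum2_3 (P Q Q2 : 'I_k -> 'I_k -> C) :
  \sum_l \sum_m (P l m - 2%:R * Q l m + Q2 l m) =
  \sum_l \sum_m P l m - 2%:R * \sum_l \sum_m Q l m + \sum_l \sum_m Q2 l m.
Proof.
rewrite mulr_sumr -sumrB -big_split; apply: eq_bigr => l _ /=.
by rewrite mulr_sumr -sumrB -big_split.
Qed.

Lemma QFF a b : \sum_c \sum_d gc c d * FF a b c d = s%:R * Gc a b.
Proof.
have e : forall c d, gc c d * FF a b c d =
   Gc a b * (gc c d * Gc c d) - 2%:R * (Gc a c * (gc c d * Gc d b))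
   + Gc a d * (Gc b c * gc c d).
  by move=> c d; rewrite /FF (GcS b d); ring.
under eq_bigr => c _ do under eq_bigr => d _ do rewrite e.
rewrite sum2_3.
under eq_bigr => c _ do rewrite -mulr_sumr.
rewrite -mulr_sumr trgG.
under [X in _ - 2%:R * X + _]eq_bigr => c _ do rewrite -mulr_sumr gG.
rewrite sdr exchange_big /=.
under [X in _ + X]eq_bigr => d _ do rewrite -mulr_sumr Gg.
rewrite sdr' natk; ring.
Qed.

Lemma QFF' a e : \sum_b \sum_c gc b c * FF a b c e = s%:R * Gc a e.
Proof.
have h : forall b c, gc b c * FF a b c e =
   Gc a b * (gc b c * Gc c e) - 2%:R * (Gc a c * (gc b c * Gc b e))
   + Gc a e * (gc b c * Gc b c).
  by move=> b c; rewrite /FF; ring.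
under eq_bigr => b _ do under eq_bigr => c _ do rewrite h.
rewrite sum2_3.
under eq_bigr => b _ do rewrite -mulr_sumr gG.
rewrite sdr exchange_big /=.
under [X in _ - 2%:R * X + _]eq_bigr => c _ do rewrite -mulr_sumr gG'.
rewrite sdr.
under [X in _ + X]eq_bigr => b _ do rewrite -mulr_sumr.
rewrite -mulr_sumr trgG natk; ring.
Qed.

Lemma basis4 : basis_mod g (fun _ : unit => gg2 g).
Proof.
split.
  apply: mono_span => w; have [a [b [c [d ->]]]] := ex4 w.
  rewrite (add_sub_split (mono R [tuple a; b; c; d]) (cD a b c d *: gg2 g)).
  apply: memv_add; last exact: D4.
  by apply: rpredZ; apply: (mem_sup (j := tt)) => //; exact: memv_line.
move=> cf hin j.
pose F (w : 4.-tuple 'I_k) := FF (letter w 0) (letter w 1) (letter w 2) (letter w 3).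
have hgen : forall (i : 'I_4) w0 l m nu, (i + 3 <= 4)%N -> pr F (relgen g i w0 l m nu) = 0.
  move=> [[|[|i']] hi4] w0 l m nu /= hi; last by exfalso; lia.
    transitivity (\sum_a \sum_b \sum_c relcoef g l m nu a b c * FF a b c (letter w0 3)).
      rewrite /pr sum4; apply: eq_bigr => a _; apply: eq_bigr => b _; apply: eq_bigr => c _.
      under eq_bigr => d _ do rewrite rg40 /F /letter /= mulrCA.
      by rewrite sdl mulrC.
    rewrite rel_pair /Psi !QFF' /FF; field; exact: sn0.
  transitivity (\sum_b \sum_c \sum_d relcoef g l m nu b c d * FF (letter w0 0) b c d).
    rewrite /pr sum4 -(sdl (fun a => \sum_b \sum_c \sum_d relcoef g l m nu b c d * FF a b c d)).
    apply: eq_bigr => a _; rewrite mulr_sumr; apply: eq_bigr => b _; rewrite mulr_sumr.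
    apply: eq_bigr => c _; rewrite mulr_sumr; apply: eq_bigr => d _.
    rewrite rg41 /F /letter /=; ring.
  rewrite rel_pair /Psi !QFF /FF; field; exact: sn0.
have := pr_ideal hgen hin; rewrite pr_sum (big_pred1 tt); last by case.
move=> /eqP.
have -> : pr F (gg2 g) = s%:R * k%:R.
  rewrite /pr sum4 -trgG mulr_sumr; apply: eq_bigr => a _; rewrite mulr_sumr.
  apply: eq_bigr => b _; transitivity (gc a b * (s%:R * Gc a b)); last by ring.
  rewrite -QFF mulr_sumr; apply: eq_bigr => c _.
  rewrite mulr_sumr; apply: eq_bigr => d _; rewrite ffunE /F /letter /=; ring.
by rewrite !mulf_eq0 (negbTE sn0) (negbTE kn0) !orbF; case: j => /eqP.
Qed.

Definition lmul n (a : 'I_k) (x : T n) : T n.+1 :=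
  [ffun w : n.+1.-tuple 'I_k => dl (letter w 0) a * x (behead_tuple w)].

Definition rmul4 (x : T 4) (e : 'I_k) : T 5 :=
  [ffun w => x [tuple letter w 0; letter w 1; letter w 2; letter w 3] * dl (letter w 4) e].

Lemma exS n (w : n.+1.-tuple 'I_k) : exists b (u : n.-tuple 'I_k), w = cons_tuple b u.
Proof. by exists (thead w), (behead_tuple w); apply: val_inj; case: w => [[|x w] //=]. Qed.

Lemma behead_cons n b (u : n.-tuple 'I_k) : behead_tuple (cons_tuple b u) = u.
Proof. exact: val_inj. Qed.

Lemma lmul_gen n (a : 'I_k) i (w0 : n.-tuple 'I_k) l m nu :
  lmul a (relgen g i w0 l m nu) = relgen g i.+1 (cons_tuple a w0) l m nu.
Proof.
apply/ffunP => w; have [b [u ->]] := exS w.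
rewrite !ffunE behead_cons /letter /= eqseq_cons -andbA.
by case: (b == a); case: ifP; rewrite ?mul1r ?mul0r.
Qed.

Lemma lmul_ideal n (a : 'I_k) (x : T n) : x \in I n -> lmul a x \in I n.+1.
Proof.
apply: ideal_map.
- by move=> x1 y1; apply/ffunP => w; rewrite !ffunE mulrDr.
- by move=> c x1; apply/ffunP => w; rewrite !ffunE !scC mulrCA.
move=> i w0 l m nu hi; rewrite lmul_gen.
have hi' : (i.+1 < n.+1)%N by rewrite ltnS; case: i hi => i /= ?; lia.
by apply: (gen_in (i := Ordinal hi')) => /=; lia.
Qed.

Lemma ex5 (w : 5.-tuple 'I_k) : exists a b c d e, w = [tuple a; b; c; d; e].
Proof.
by exists (letter w 0), (letter w 1), (letter w 2), (letter w 3), (letter w 4); exact: tuple5_eq.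
Qed.

Lemma rmul4_ideal (x : T 4) e : x \in I 4 -> rmul4 x e \in I 5.
Proof.
apply: (ideal_map (h := fun y : T 4 => rmul4 y e)).
- by move=> x1 y1; apply/ffunP => w; rewrite !ffunE mulrDl.
- by move=> c x1; apply/ffunP => w; rewrite !ffunE !scC mulrA.
move=> [[|[|i']] hi4] w0 l m nu /= hi; last by exfalso; lia.
  have [a0 [b0 [c0 [d0 ->]]]] := ex4 w0.
  have -> : rmul4 (relgen g 0 [tuple a0; b0; c0; d0] l m nu) e =
      relgen g 0 [tuple a0; b0; c0; d0; e] l m nu.
    apply/ffunP => w; have [a [b [c [d [f ->]]]]] := ex5 w.
    rewrite ffunE rg40 ffunE /letter /= !eqseq_cons andbT ifdl -mulnb natrM; ring.
  by apply: (gen_in (i := @Ordinal 5 0 isT)).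
have [a0 [b0 [c0 [d0 ->]]]] := ex4 w0.
have -> : rmul4 (relgen g 1 [tuple a0; b0; c0; d0] l m nu) e =
    relgen g 1 [tuple a0; b0; c0; d0; e] l m nu.
  apply/ffunP => w; have [a [b [c [d [f ->]]]]] := ex5 w.
  rewrite ffunE rg41 ffunE /letter /= !eqseq_cons !andbT ifdl -mulnb natrM; ring.
by apply: (gen_in (i := @Ordinal 5 1 isT)).
Qed.

Lemma sdr2 (F : 'I_k -> C) X f : \sum_e F e * (X * dl f e) = F f * X.
Proof. by under eq_bigr => e _ do rewrite mulrCA mulrC; rewrite -mulr_suml sdr'. Qed.

Lemma P5a a : lmul a (gg2 g) - (k%:R)^-1 *: rmul4 (gg2 g) a \in I 5.
Proof.
have -> : lmul a (gg2 g) - (k%:R)^-1 *: rmul4 (gg2 g) a =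
    \sum_d \sum_e gc d e *: rmul4 (Xm a d - (Gc a d / k%:R) *: gg2 g) e.
  apply/ffunP => w; have [a' [b [c [d' [f ->]]]]] := ex5 w.
  rewrite sum_ffunE; under eq_bigr => d _ do rewrite sum_ffunE.
  under eq_bigr => d _ do under eq_bigr => e _ do rewrite ffZ ffunE ffB ffZ !ffunE /letter /=.
  rewrite ffB ffZ !ffunE /letter /=.
  symmetry; under eq_bigr => d _ do rewrite sdr2.
  transitivity ((dl a' a * gc b c) * (\sum_d gc d f * dl d' d)
      - ((k%:R)^-1 * (gc a' b * gc c d')) * (\sum_d Gc a d * gc d f)).
    by rewrite !mulr_sumr -sumrB; apply: eq_bigr => d _; ring.
  by rewrite sdr' Gg (eq_sym a f); ring.
apply: rpred_sum => d _; apply: rpred_sum => e _; apply: rpredZ.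
by apply: rmul4_ideal; exact: F1.
Qed.

Lemma P5b e : rmul4 (gg2 g) e - (k%:R)^-1 *: lmul e (gg2 g) \in I 5.
Proof.
have -> : rmul4 (gg2 g) e - (k%:R)^-1 *: lmul e (gg2 g) =
    \sum_a \sum_b gc a b *: lmul a (Xm b e - (Gc b e / k%:R) *: gg2 g).
  apply/ffunP => w; have [a' [b' [c [d [f ->]]]]] := ex5 w.
  rewrite sum_ffunE; under eq_bigr => a _ do rewrite sum_ffunE.
  under eq_bigr => a _ do under eq_bigr => b _ do rewrite ffZ ffunE ffB ffZ !ffunE /letter /=.
  rewrite ffB ffZ !ffunE /letter /=.
  symmetry.
  transitivity (\sum_a dl a' a * \sum_b gc a b * (dl b' b * (gc c d * dl f e)
        - Gc b e / k%:R * (gc b' c * gc d f))).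
    by apply: eq_bigr => a _; rewrite mulr_sumr; apply: eq_bigr => b _; ring.
  rewrite sdl'.
  transitivity ((gc c d * dl f e) * (\sum_b gc a' b * dl b' b)
      - ((k%:R)^-1 * (gc b' c * gc d f)) * (\sum_b gc a' b * Gc b e)).
    by rewrite !mulr_sumr -sumrB; apply: eq_bigr => b _; ring.
  by rewrite sdr' gG; ring.
apply: rpred_sum => a _; apply: rpred_sum => b _; apply: rpredZ.
by apply: lmul_ideal; exact: F1.
Qed.

Lemma lin5 (K : fieldType) (V : lmodType K) (x y : V) (q : K) :
  1 - q * q != 0 -> x = (1 - q * q)^-1 *: ((x - q *: y) + q *: (y - q *: x)).
Proof.
move=> hq; rewrite scalerBr scalerA addrA subrK.
have -> : x - (q * q) *: x = (1 - q * q) *: x by rewrite scalerBl scale1r.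
by rewrite scalerA mulVf // scale1r.
Qed.

Lemma qn0 : (1 - (k%:R)^-1 * (k%:R)^-1 : C) != 0.
Proof.
apply/eqP => h.
have : (k%:R * k%:R : C) * (1 - (k%:R)^-1 * (k%:R)^-1) = 0 by rewrite h mulr0.
have -> : (k%:R * k%:R : C) * (1 - (k%:R)^-1 * (k%:R)^-1) = (k * k - 1)%N%:R.
  rewrite natrB ?muln_gt0 // natrM; field; by rewrite addrC -natk kn0.
by move/eqP; rewrite pnatr_eq0; nia.
Qed.

Lemma gg2_5 a : lmul a (gg2 g) \in I 5.
Proof.
rewrite (lin5 (lmul a (gg2 g)) (rmul4 (gg2 g) a) qn0).
by apply: rpredZ; apply: rpredD; [exact: P5a | apply: rpredZ; exact: P5b].
Qed.

Lemma mono_cons n a (t : n.-tuple 'I_k) : mono R (cons_tuple a t) = lmul a (mono R t).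
Proof.
apply/ffunP => w; have [b [u ->]] := exS w.
rewrite !ffunE behead_cons /letter /= -val_eqE /= eqseq_cons val_eqE.
by case: (b == a); rewrite ?mul1r ?mul0r.
Qed.

Lemma lmul_lin n a (x y : T n) (c : C) : lmul a (x + c *: y) = lmul a x + c *: lmul a y.
Proof. by apply/ffunP => w; rewrite !ffunE !scC; ring. Qed.

Lemma mono5 (w : 5.-tuple 'I_k) : mono R w \in I 5.
Proof.
have [a [u ->]] := exS w; have [b [c [d [e ->]]]] := ex4 u.
rewrite mono_cons (add_sub_split (mono R [tuple b; c; d; e]) (cD b c d e *: gg2 g)).
rewrite addrC lmul_lin; apply: rpredD; first by apply: lmul_ideal; exact: D4.
by apply: rpredZ; exact: gg2_5.
Qed.

Lemma zero_all n : (5 <= n)%N -> zero_mod g n.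
Proof.
elim: n => [//|n IH] hn; rewrite /zero_mod; apply: mono_span => w.
have [a [u ->]] := exS w.
case: (ltnP n 5) => hn5.
  have e : n = 4 by lia.
  subst n; exact: mono5.
rewrite mono_cons; apply: lmul_ideal; rewrite (IH hn5); exact: memvf.
Qed.



End Main.






Theorem proposition1 (R : realType) (s : nat) (g : 'M[R]_s.+1) :
  (1 <= s)%N -> g^T = g -> g \in unitmx ->
  [/\ basis_mod g (fun _ : unit => unit0 R s),
      basis_mod g (theta R (s:=s)),
      basis_mod g (theta2 R (s:=s)),
      basis_mod g (theta_gg g)
    & basis_mod g (fun _ : unit => gg2 g)] /\
  (forall n, (5 <= n)%N -> zero_mod g n) /\
  [/\ dimA g 0 = 1%N, dimA g 4 = 1%N, dimA g 1 = s.+1, dimA g 3 = s.+1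
    & dimA g 2 = (s.+1 ^ 2)%N].
Proof.
move=> hs gs gu.
have b3 := basis3 hs gs gu; have b4 := basis4 hs gs gu.
split; first by split; [exact: basis0|exact: basis1|exact: basis2|exact: b3|exact: b4].
split; first by move=> n; exact: zero_all.
split.
- by rewrite (dimA_basis (basis0 g)) card_unit.
- by rewrite (dimA_basis b4) card_unit.
- by rewrite (dimA_basis (basis1 g)) card_ord.
- by rewrite (dimA_basis b3) card_ord.
- by rewrite (dimA_basis (basis2 g)) card_prod card_ord expnS expn1.
Qed.
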